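(* Let $\{b_n\}_{n\ge1}$ be a sequence of non-zero complex numbers with finite exponent of convergence and genus $p\ge1$, and let $a>0$ be real with $a+b_n\neq0$ for all $n$. Then for every $z\in\mathbb C$, $$\sum_{n=1}^\infty\sum_{j=1}^p\frac{(-1)^j}{j}a^j\Big(\frac{z^j}{(a+b_n)^j}-\frac{(1+z)^j}{b_n^j}+\frac1{b_n^j}\Big)=\sum_{k=1}^pE^p_k(a)z^k,$$ where $E^p_k(a)=\sum_{n=1}^\infty\Big(\frac{(-1)^k}{k}\frac{a^k}{(a+b_n)^k}-\sum_{j=k}^p\frac{(-1)^j}{j}\binom jk\frac{a^j}{b_n^j}\Big)$, all series being convergent.
   Context: For a sequence $\{b_n\}$ of non-zero complex numbers with only accumulation point $\infty$ (ordered by modulus), the exponent of convergence is $\limsup_n\log n/\log|b_n|$ and the genus $p$ is its integer part, i.e. the least integer $p\ge0$ with $\sum_n|b_n|^{-p-1}<\infty$. *)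

(* Defs.v *)
From Stdlib Require Import Reals.
From Coquelicot Require Import Coquelicot.
Open Scope R_scope.

(* Sequences are indexed from 0: [b n] stands for the paper's b_{n+1}. *)

Definition admissible_seq (b : nat -> C) : Prop :=
  (forall n, b n <> 0%C) /\
  (forall n, Cmod (b n) <= Cmod (b (S n))) /\
  is_lim_seq (fun n => Cmod (b n)) p_infty.

(* Exponent of convergence: limsup_n log n / log |b_n|  (n starting at 1). *)
Definition exponent_of_convergence (b : nat -> C) : Rbar :=
  LimSup_seq (fun n => ln (INR (S n)) / ln (Cmod (b n))).

Definition finite_exponent (b : nat -> C) : Prop :=
  is_finite (exponent_of_convergence b).

Definition summable_pow (b : nat -> C) (q : nat) : Prop :=
  ex_series (fun n => / (Cmod (b n)) ^ q).

Definition genus_is (b : nat -> C) (p : nat) : Prop :=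
  summable_pow b (S p) /\ forall q, (q < p)%nat -> ~ summable_pow b (S q).

Definition csum (m p : nat) (f : nat -> C) : C := sum_n_m f m p.

Definition coef (a : R) (j : nat) : C := RtoC ((-1) ^ j / INR j * a ^ j).

Definition lhs_term (p : nat) (a : R) (b : nat -> C) (z : C) (n : nat) : C :=
  csum 1 p (fun j => Cmult (coef a j)
     (Cplus (Cminus (Cdiv (pow_n z j) (pow_n (Cplus (RtoC a) (b n)) j))
                    (Cdiv (pow_n (Cplus 1 z) j) (pow_n (b n) j)))
            (Cinv (pow_n (b n) j)))).

Definition E_term (p : nat) (a : R) (b : nat -> C) (k : nat) (n : nat) : C :=
  Cminus (Cdiv (coef a k) (pow_n (Cplus (RtoC a) (b n)) k))
         (csum k p (fun j => Cmult (RtoC (Binomial.C j k))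
                                   (Cdiv (coef a j) (pow_n (b n) j)))).

(* Main.v *)
Require Import Defs.
From Stdlib Require Import Reals Lia Lra Factorial.
From Coquelicot Require Import Coquelicot.
From Stdlib Require Import ClassicalEpsilon Classical.

Local Open Scope C_scope.


Ltac topow := repeat match goal with |- context [@pow_n C_Ring ?x ?k] => change (@pow_n C_Ring x k) with (Cpow x k) end.
Ltac Ceq := match goal with |- @eq _ ?x ?y => change (@eq C x y) end.

Lemma pow_n_C (z : C) n : @pow_n C_Ring z n = Cpow z n.
Proof. induction n; simpl; [reflexivity| rewrite IHn; reflexivity]. Qed.

Lemma sum_mult_l (c : C) (f : nat -> C) m q :
  sum_n_m (fun k => c * f k) m q = c * sum_n_m f m q.
Proof. exact (@sum_n_m_mult_l C_Ring c f m q). Qed.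

Lemma sum_mult_r (c : C) (f : nat -> C) m q :
  sum_n_m (fun k => f k * c) m q = sum_n_m f m q * c.
Proof. exact (@sum_n_m_mult_r C_Ring c f m q). Qed.

Lemma sum_plus (f g : nat -> C) m q :
  sum_n_m (fun k => f k + g k) m q = sum_n_m f m q + sum_n_m g m q.
Proof. exact (@sum_n_m_plus C_AbelianMonoid f g m q). Qed.

Lemma sum_ext (f g : nat -> C) m q :
  (forall k, f k = g k) -> sum_n_m f m q = sum_n_m g m q.
Proof. apply sum_n_m_ext. Qed.

Lemma sum_minus (f g : nat -> C) m q :
  sum_n_m (fun k => f k - g k) m q = sum_n_m f m q - sum_n_m g m q.
Proof.
  transitivity (sum_n_m (fun k => f k + (-1) * g k) m q).
  apply sum_ext; intros; unfold Cminus; (Ceq; ring).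
  rewrite sum_plus, sum_mult_l. unfold Cminus. (Ceq; ring).
Qed.

Lemma sum_ext_loc (f g : nat -> C) m q :
  (forall k, (m <= k <= q)%nat -> f k = g k) -> sum_n_m f m q = sum_n_m g m q.
Proof. apply sum_n_m_ext_loc. Qed.

Lemma sum_n_Sm_C (f : nat -> C) m q : (m <= S q)%nat ->
  sum_n_m f m (S q) = sum_n_m f m q + f (S q).
Proof. intros. exact (@sum_n_Sm C_AbelianMonoid f m q H). Qed.

Lemma sum_Sn_m_C (f : nat -> C) m q : (m <= q)%nat ->
  sum_n_m f m q = f m + sum_n_m f (S m) q.
Proof. intros. exact (@sum_Sn_m C_AbelianMonoid f m q H). Qed.

Lemma sum_zero_C (f : nat -> C) m q : (q < m)%nat -> sum_n_m f m q = RtoC 0.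
Proof. intros. exact (@sum_n_m_zero C_AbelianMonoid f m q H). Qed.

Lemma sum_S_C (f : nat -> C) m q :
  sum_n_m (fun k => f (S k)) m q = sum_n_m f (S m) (S q).
Proof. exact (@sum_n_m_S C_AbelianMonoid f m q). Qed.

Lemma sum_n_n_C (f : nat -> C) m : sum_n_m f m m = f m.
Proof. exact (@sum_n_n C_AbelianMonoid f m). Qed.

Lemma binomC (z : C) j :
  Cpow (1 + z) j = sum_n_m (fun k => RtoC (Binomial.C j k) * Cpow z k) 0 j.
Proof.
  induction j.
  - rewrite sum_n_n_C. rewrite C_n_0. simpl. (Ceq; ring).
  - rewrite Cpow_S, IHj.
    replace ((1 + z) * sum_n_m (fun k : nat => RtoC (Binomial.C j k) * Cpow z k) 0 j)
      with (sum_n_m (fun k : nat => RtoC (Binomial.C j k) * Cpow z k) 0 j +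
            sum_n_m (fun k : nat => RtoC (Binomial.C j k) * Cpow z (S k)) 0 j).
    2:{ assert (Hz: sum_n_m (fun k : nat => RtoC (Binomial.C j k) * Cpow z (S k)) 0 j =
              z * sum_n_m (fun k : nat => RtoC (Binomial.C j k) * Cpow z k) 0 j).
        { rewrite <- sum_mult_l. apply sum_ext; intros; rewrite Cpow_S; (Ceq; ring). }
        rewrite Hz. (Ceq; ring). }
    rewrite (sum_Sn_m_C _ 0 (S j)) by lia.
    rewrite (sum_Sn_m_C _ 0 j) by lia.
    replace (sum_n_m (fun k => RtoC (Binomial.C j k) * Cpow z (S k)) 0 j) with
      (sum_n_m (fun i => RtoC (Binomial.C j (pred i)) * Cpow z i) 1 (S j))
      by (rewrite <- sum_S_C; apply sum_ext; reflexivity).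
    rewrite sum_n_Sm_C by lia.
    destruct j as [|j].
    + rewrite !sum_zero_C by lia. simpl. rewrite !C_n_0, sum_n_n_C, C_n_n. (Ceq; ring).
    + rewrite (sum_n_Sm_C (fun k : nat => RtoC (Binomial.C (S (S j)) k) * Cpow z k)) by lia.
      rewrite (sum_ext_loc (fun k : nat => RtoC (Binomial.C (S (S j)) k) * Cpow z k)
        (fun k => RtoC (Binomial.C (S j) k) * Cpow z k + RtoC (Binomial.C (S j) (pred k)) * Cpow z k)).
      2:{ intros k Hk. destruct k as [|k]; [lia|]. simpl pred.
          rewrite <- (pascal (S j) k) by lia. rewrite RtoC_plus. (Ceq; ring). }
      rewrite sum_plus. simpl pred. rewrite !C_n_0, !C_n_n. (Ceq; ring).
Qed.

Lemma swap (F : nat -> nat -> C) p :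
  sum_n_m (fun j => sum_n_m (fun k => F j k) 1 j) 1 p =
  sum_n_m (fun k => sum_n_m (fun j => F j k) k p) 1 p.
Proof.
  induction p.
  - rewrite !sum_zero_C by lia. reflexivity.
  - rewrite sum_n_Sm_C by lia. rewrite IHp.
    rewrite (sum_ext_loc (fun k => sum_n_m (fun j => F j k) k (S p))
      (fun k => sum_n_m (fun j => F j k) k p + F (S p) k))
      by (intros; apply sum_n_Sm_C; lia).
    rewrite sum_plus.
    rewrite (sum_n_Sm_C (fun k => sum_n_m (fun j => F j k) k p)) by lia.
    rewrite (sum_zero_C _ (S p) p) by lia. change (sum_n_m (F (S p)) 1 (S p)) with (sum_n_m (fun k => F (S p) k) 1 (S p)). Ceq; ring.
Qed.

Lemma lhs_ident p a b z n :
  lhs_term p a b z n = csum 1 p (fun k => Cmult (E_term p a b k n) (pow_n z k)).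
Proof.
  unfold lhs_term, E_term, csum.
  set (A := fun j => coef a j * (Cpow z j * / Cpow (RtoC a + b n) j)).
  set (B := fun j => coef a j * / Cpow (b n) j).
  transitivity (sum_n_m (fun j => A j - sum_n_m (fun k => RtoC (Binomial.C j k) * B j * Cpow z k) 1 j) 1 p).
  { apply sum_ext; intro j. topow; rewrite binomC.
    rewrite (sum_Sn_m_C _ 0 j) by lia. rewrite C_n_0.
    assert (H: sum_n_m (fun k => RtoC (Binomial.C j k) * B j * Cpow z k) 1 j =
               B j * sum_n_m (fun k => RtoC (Binomial.C j k) * Cpow z k) 1 j).
    { rewrite <- sum_mult_l. apply sum_ext; intros; Ceq; ring. }
    rewrite H. unfold A, B, Cdiv, Cminus. simpl. topow. Ceq; ring. }
  transitivity (sum_n_m (fun k => A k - sum_n_m (fun j => RtoC (Binomial.C j k) * B j * Cpow z k) k p) 1 p).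
  2:{ apply sum_ext; intro k. topow.
    assert (H: sum_n_m (fun j => RtoC (Binomial.C j k) * B j * Cpow z k) k p =
               sum_n_m (fun j => Cmult (RtoC (Binomial.C j k)) (Cdiv (coef a j) (pow_n (b n) j))) k p * Cpow z k).
    { rewrite <- sum_mult_r. apply sum_ext; intros; unfold B, Cdiv; topow; Ceq; ring. }
    rewrite H. unfold A, Cdiv, Cminus. Ceq; ring. }
  rewrite !sum_minus. rewrite (swap (fun j k => RtoC (Binomial.C j k) * B j * Cpow z k)). reflexivity.
Qed.

Definition dK (K m : nat) : C := RtoC (Binomial.C (K + m) m).

Fixpoint Sp (K N : nat) (u : C) : C :=
  match N with 0 => 0 | S N' => Sp K N' u + dK K N' * Cpow u N' end.

Lemma dK_0 K : dK K 0 = 1.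
Proof. unfold dK. rewrite C_n_0. reflexivity. Qed.

Lemma Sp_rec K N (u : C) : Sp (S K) (S N) u = Sp K (S N) u + u * Sp (S K) N u.
Proof.
  induction N.
  - simpl. rewrite !dK_0. ring.
  - change (Sp (S K) (S (S N)) u) with (Sp (S K) (S N) u + dK (S K) (S N) * Cpow u (S N)).
    change (Sp K (S (S N)) u) with (Sp K (S N) u + dK K (S N) * Cpow u (S N)).
    rewrite IHN at 1.
    change (Sp (S K) (S N) u) with (Sp (S K) N u + dK (S K) N * Cpow u N).
    assert (H : dK (S K) (S N) = dK K (S N) + dK (S K) N).
    { unfold dK. rewrite <- RtoC_plus. f_equal.
      replace (S K + N)%nat with (K + S N)%nat by lia.
      replace (S K + S N)%nat with (S (K + S N))%nat by lia.
      rewrite <- pascal by lia. ring. }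
    rewrite H. rewrite Cpow_S. ring.
Qed.

Lemma Sp0_rec N (u : C) : Sp 0 (S N) u = 1 + u * Sp 0 N u.
Proof.
  induction N.
  - simpl. rewrite dK_0. ring.
  - change (Sp 0 (S (S N)) u) with (Sp 0 (S N) u + dK 0 (S N) * Cpow u (S N)).
    rewrite IHN at 1. change (Sp 0 (S N) u) with (Sp 0 N u + dK 0 N * Cpow u N). unfold dK. simpl plus. rewrite !C_n_n. rewrite Cpow_S. ring.
Qed.

Definition Rm (K N : nat) (u : C) : C := / Cpow (1 - u) (S K) - Sp K N u.

Lemma Rm_rec K N (u : C) : u <> 1 -> Rm (S K) (S N) u = Rm K (S N) u + u * Rm (S K) N u.
Proof.
  intros Hu. unfold Rm. rewrite Sp_rec.
  assert (H1 : 1 - u <> 0). { intro H. apply Hu. 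
    assert (E: u = 1 - (1 - u)) by ring. rewrite E, H. ring. }
  rewrite !Cpow_S. field. split; auto. apply Cpow_nz; auto.
Qed.

Lemma Rm0_rec N (u : C) : u <> 1 -> Rm 0 (S N) u = u * Rm 0 N u.
Proof.
  intros Hu. unfold Rm. rewrite Sp0_rec.
  assert (H1 : 1 - u <> 0). { intro H. apply Hu.
    assert (E: u = 1 - (1 - u)) by ring. rewrite E, H. ring. }
  simpl Cpow. field. auto.
Qed.

Lemma inv_bound (u : C) n : Cmod u <= 1/2 -> (Cmod (/ Cpow (1 - u) n) <= 2 ^ n)%R.
Proof.
  intros Hu.
  assert (H2 : (1/2 <= Cmod (1 - u))%R).
  { assert (H := Cmod_triangle (1 - u) u).
    replace (1 - u + u) with (RtoC 1) in H by ring. rewrite Cmod_1 in H. lra. }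
  assert (H1 : 1 - u <> 0). { intro H. rewrite H, Cmod_0 in H2. lra. }
  rewrite Cmod_inv by (apply Cpow_nz; auto). rewrite Cmod_pow.
  rewrite <- pow_inv.
  apply pow_incr. split.
  - left. apply Rinv_0_lt_compat. lra.
  - replace 2%R with (/ (1/2))%R by field. apply Rinv_le_contravar; lra.
Qed.

Lemma Rm_bound K : forall N, exists M, (0 <= M)%R /\
  forall u, (Cmod u <= 1/2)%R -> (Cmod (Rm K N u) <= M * Cmod u ^ N)%R.
Proof.
  induction K as [|K IHK]; intro N; induction N as [|N IHN].
  - exists (2 ^ 1)%R. split. apply pow_le; lra.
    intros u Hu. unfold Rm. simpl Sp. replace (/ Cpow (1 - u) 1 - 0) with (/ Cpow (1 - u) 1) by ring.
    simpl pow. rewrite Rmult_1_r. apply (inv_bound u 1); auto.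
  - destruct IHN as [M [HM HB]]. exists M. split; auto.
    intros u Hu. assert (Hu1 : u <> 1).
    { intro H. rewrite H, Cmod_1 in Hu. lra. }
    rewrite Rm0_rec by auto. rewrite Cmod_mult. simpl pow.
    specialize (HB u Hu). pose proof (Cmod_ge_0 u). nra.
  - exists (2 ^ S (S K))%R. split. apply pow_le; lra.
    intros u Hu. unfold Rm. simpl Sp. replace (/ Cpow (1 - u) (S (S K)) - 0) with (/ Cpow (1 - u) (S (S K))) by ring.
    simpl pow at 2. rewrite Rmult_1_r. apply inv_bound; auto.
  - destruct IHN as [M2 [HM2 HB2]]. destruct (IHK (S N)) as [M1 [HM1 HB1]].
    exists (M1 + M2)%R. split. lra.
    intros u Hu. assert (Hu1 : u <> 1).
    { intro H. rewrite H, Cmod_1 in Hu. lra. }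
    rewrite Rm_rec by auto.
    eapply Rle_trans. apply Cmod_triangle. rewrite Cmod_mult.
    specialize (HB1 u Hu). specialize (HB2 u Hu). pose proof (Cmod_ge_0 u).
    simpl pow in *. 
    assert (0 <= Cmod u ^ N)%R by (apply pow_le; auto).
    nra.
Qed.

Lemma coef_binom K m a :
  (Binomial.C (S K + m) (S K) * ((-1)^(S K + m) / INR (S K + m) * a^(S K + m)) =
   ((-1)^(S K) / INR (S K) * a^(S K)) * Binomial.C (K + m) m * (-a)^m)%R.
Proof.
  unfold Binomial.C.
  replace (S K + m - S K)%nat with m by lia. replace (K + m - m)%nat with K by lia.
  replace (S K + m)%nat with (S (K + m)) by lia.
  change (fact (S (K + m))) with (S (K + m) * fact (K + m))%nat.
  change (fact (S K)) with (S K * fact K)%nat.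
  rewrite !mult_INR.
  replace ((-a)^m)%R with ((-1)^m * a^m)%R by (rewrite <- Rpow_mult_distr; f_equal; ring).
  simpl pow. rewrite !pow_add.
  assert (H1 := INR_fact_neq_0 K). assert (H2 := INR_fact_neq_0 m).
  assert (H3 := INR_fact_neq_0 (K + m)).
  assert (H4 : INR (S (K + m)) <> 0%R) by (apply not_0_INR; lia).
  assert (H5 : INR (S K) <> 0%R) by (apply not_0_INR; lia).
  field. repeat split; auto.
Qed.

Lemma term_ident K m a (w : C) :
  RtoC (Binomial.C (S K + m) (S K)) * (coef a (S K + m) * Cpow w (S K + m)) =
  coef a (S K) * Cpow w (S K) * (dK K m * Cpow (-(RtoC a * w)) m).
Proof.
  replace (-(RtoC a * w)) with (RtoC (-a) * w) by (rewrite RtoC_opp; ring).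
  rewrite Cpow_mult_l, <- RtoC_pow, Cpow_add_r.
  transitivity (RtoC (Binomial.C (S K + m) (S K) * ((-1)^(S K + m) / INR (S K + m) * a^(S K + m)))
     * (Cpow w (S K) * Cpow w m)).
  { unfold coef. rewrite (RtoC_mult (Binomial.C _ _)). ring. }
  rewrite coef_binom. unfold coef, dK. rewrite !RtoC_mult. ring.
Qed.

Lemma sum_ident K N' a (w : C) :
  sum_n_m (fun j => RtoC (Binomial.C j (S K)) * (coef a j * Cpow w j)) (S K) (S K + N') =
  coef a (S K) * Cpow w (S K) * Sp K (S N') (-(RtoC a * w)).
Proof.
  induction N'.
  - rewrite Nat.add_0_r, sum_n_n_C. simpl Sp.
    pose proof (term_ident K 0 a w) as H. rewrite Nat.add_0_r in H. rewrite H. Ceq; ring.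
  - replace (S K + S N')%nat with (S (S K + N')) by lia.
    rewrite sum_n_Sm_C by lia. rewrite IHN'.
    change (Sp K (S (S N')) (-(RtoC a * w))) with
      (Sp K (S N') (-(RtoC a * w)) + dK K (S N') * Cpow (-(RtoC a * w)) (S N')).
    replace (S (S K + N')) with (S K + S N')%nat by lia.
    rewrite term_ident. Ceq; ring.
Qed.

Lemma E_ident p (a : R) (b : nat -> C) n K N' : p = (S K + N')%nat -> b n <> 0 -> RtoC a + b n <> 0 ->
  E_term p a b (S K) n = coef a (S K) * Cpow (/ b n) (S K) * Rm K (S N') (-(RtoC a * / b n)).
Proof.
  intros Hp Hb Hab. unfold E_term, csum, Rm. subst p.
  rewrite (sum_ext _ (fun j => RtoC (Binomial.C j (S K)) * (coef a j * Cpow (/ b n) j))).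
  2:{ intros j. topow. unfold Cdiv. rewrite Cpow_inv by auto. reflexivity. }
  rewrite sum_ident. topow.
  assert (Hx : 1 - - (RtoC a * / b n) <> 0).
  { intro H. apply Hab. replace (RtoC a + b n) with (b n * (1 - - (RtoC a * / b n))) by (field; auto).
    rewrite H. ring. }
  assert (E : / (RtoC a + b n) = / b n * / (1 - - (RtoC a * / b n))).
  { field. split; auto. intro H. apply Hab. rewrite <- H. ring. }
  unfold Cdiv. rewrite <- Cpow_inv by auto. rewrite E, Cpow_mult_l, !Cpow_inv by auto.
  ring.
Qed.

Lemma E_conv p (a : R) (b : nat -> C) k :
  admissible_seq b -> summable_pow b (S p) -> (0 < a)%R ->
  (forall n, RtoC a + b n <> 0) -> (1 <= k <= p)%nat -> ex_series (E_term p a b k).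
Proof.
  intros [Hnz [_ Hlim]] Hsum Ha Hab Hk.
  destruct k as [|K]; [lia|].
  set (N' := (p - S K)%nat). assert (Hp : p = (S K + N')%nat) by (unfold N'; lia).
  destruct (Rm_bound K (S N')) as [M [HM HB]].
  apply is_lim_seq_spec in Hlim. destruct (Hlim (2 * a)%R) as [N0 HN0].
  apply (ex_series_incr_n _ N0).
  apply (@ex_series_le C_AbsRing C_CompleteNormedModule _ (fun n => (Cmod (coef a (S K)) * M * a ^ (S N')) * / Cmod (b (N0 + n)%nat) ^ (S p))%R).
  - intros n. specialize (HN0 (N0 + n)%nat ltac:(lia)).
    set (bn := b (N0 + n)%nat) in *.
    change (norm (E_term p a b (S K) (N0 + n)%nat)) with (Cmod (E_term p a b (S K) (N0 + n)%nat)).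
    rewrite (E_ident p a b (N0 + n) K N' Hp (Hnz _) (Hab _)). fold bn.
    assert (Hbpos : (0 < Cmod bn)%R) by lra.
    set (r := (/ Cmod bn)%R).
    assert (Hr : (0 < r)%R) by (apply Rinv_0_lt_compat; lra).
    assert (Hu : Cmod (- (RtoC a * / bn)) = (a * r)%R).
    { rewrite Cmod_opp, Cmod_mult, Cmod_inv by apply Hnz. rewrite Cmod_R, Rabs_pos_eq by lra. reflexivity. }
    assert (Hu2 : (a * r <= 1/2)%R).
    { unfold r. apply (Rmult_le_reg_r (Cmod bn)); auto.
      replace (a * / Cmod bn * Cmod bn)%R with a by (field; lra). lra. }
    specialize (HB (- (RtoC a * / bn))). rewrite Hu in HB. specialize (HB Hu2).
    rewrite !Cmod_mult, Cmod_pow, Cmod_inv by apply Hnz. fold r.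
    replace (/ Cmod bn ^ S p)%R with (r ^ S p)%R by (unfold r; rewrite pow_inv; reflexivity).
    rewrite Hp. replace (S (S K + N')) with (S K + S N')%nat by lia. rewrite pow_add.
    rewrite Rpow_mult_distr in HB.
    assert (0 <= Cmod (coef a (S K)))%R by apply Cmod_ge_0.
    assert (0 <= r ^ S K)%R by (apply pow_le; lra).
    assert (0 <= r ^ S N')%R by (apply pow_le; lra).
    assert (0 <= a ^ S N')%R by (apply pow_le; lra).
    apply Rle_trans with (Cmod (coef a (S K)) * r ^ S K * (M * (a ^ S N' * r ^ S N')))%R.
    + apply Rmult_le_compat_l; auto. apply Rmult_le_pos; auto.
    + right. ring.
  - apply (ex_series_ext (fun n => scal (Cmod (coef a (S K)) * M * a ^ (S N'))%R (/ Cmod (b (N0 + n)%nat) ^ (S p))%R)).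
    { intros n. reflexivity. }
    apply (@ex_series_scal_l R_AbsRing R_NormedModule). apply (proj1 (ex_series_incr_n (fun n => / Cmod (b n) ^ S p)%R N0)). exact Hsum.
Qed.


Lemma is_series_sumC (f : nat -> nat -> C) (L : nat -> C) m q :
  (forall k, (m <= k <= m + q)%nat -> is_series (f k) (L k)) ->
  is_series (fun n => sum_n_m (fun k => f k n) m (m + q)) (sum_n_m L m (m + q)).
Proof.
  induction q; intros H.
  - rewrite Nat.add_0_r in *. rewrite sum_n_n_C.
    apply (@is_series_ext C_AbsRing C_NormedModule (f m)).
    { intros n. rewrite sum_n_n_C. reflexivity. }
    apply H. lia.
  - replace (m + S q)%nat with (S (m + q)) by lia.
    rewrite sum_n_Sm_C by lia.
    apply (@is_series_ext C_AbsRing C_NormedModule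
             (fun n => plus (sum_n_m (fun k => f k n) m (m + q)) (f (S (m + q)) n))).
    { intros n. rewrite sum_n_Sm_C by lia. reflexivity. }
    apply (@is_series_plus C_AbsRing C_NormedModule).
    + apply IHq. intros; apply H; lia.
    + apply H; lia.
Qed.

Lemma is_series_sumC' (f : nat -> nat -> C) (L : nat -> C) m q : (m <= q)%nat ->
  (forall k, (m <= k <= q)%nat -> is_series (f k) (L k)) ->
  is_series (fun n => sum_n_m (fun k => f k n) m q) (sum_n_m L m q).
Proof.
  intros Hmq H. replace q with (m + (q - m))%nat by lia.
  apply is_series_sumC. intros; apply H; lia.
Qed.

Local Close Scope C_scope.

Theorem mainTheorem7 (b : nat -> C) (p : nat) (a : R) :
  admissible_seq b ->
  finite_exponent b ->
  genus_is b p ->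
  (1 <= p)%nat ->
  (0 < a)%R ->
  (forall n, Cplus (RtoC a) (b n) <> 0%C) ->
  exists E : nat -> C,
    (forall k, (1 <= k <= p)%nat -> is_series (E_term p a b k) (E k)) /\
    (forall z : C,
       is_series (lhs_term p a b z)
         (csum 1 p (fun k => Cmult (E k) (pow_n z k)))).
Proof.
  intros Hadm _ [Hsum _] Hp Ha Hab.
  assert (Hex : forall k, exists l : C, (1 <= k <= p)%nat -> is_series (E_term p a b k) l).
  { intro k. destruct (classic (1 <= k <= p)%nat) as [Hk|Hk].
    - destruct (E_conv p a b k Hadm Hsum Ha Hab Hk) as [l Hl]. exists l. auto.
    - exists (RtoC 0). intro; contradiction. }
  exists (fun k => proj1_sig (constructive_indefinite_description _ (Hex k))).
  split.
  - intros k Hk. exact (proj2_sig (constructive_indefinite_description _ (Hex k)) Hk).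
  - intros z.
    apply (@is_series_ext C_AbsRing C_NormedModule
      (fun n => csum 1 p (fun k => Cmult (E_term p a b k n) (pow_n z k)))).
    { intros n. symmetry. apply lhs_ident. }
    unfold csum.
    apply (is_series_sumC' (fun k n => Cmult (E_term p a b k n) (pow_n z k))). exact Hp.
    intros k Hk.
    apply (@is_series_ext C_AbsRing C_NormedModule
      (fun n => scal (pow_n z k) (E_term p a b k n))).
    { intros n. change (scal (pow_n z k) (E_term p a b k n)) with
        (Cmult (pow_n z k) (E_term p a b k n)). apply Cmult_comm. }
    replace (Cmult (proj1_sig (constructive_indefinite_description _ (Hex k))) (pow_n z k))
      with (scal (pow_n z k) (proj1_sig (constructive_indefinite_description _ (Hex k)))).
    2:{ change (scal (pow_n z k) (proj1_sig (constructive_indefinite_description _ (Hex k)))) with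
        (Cmult (pow_n z k) (proj1_sig (constructive_indefinite_description _ (Hex k)))). apply Cmult_comm. }
    apply (@is_series_scal_l C_AbsRing C_NormedModule).
    replace p%nat with p by lia.
    exact (proj2_sig (constructive_indefinite_description _ (Hex k)) ltac:(lia)).
Qed.
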